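(* Let $d \geq 3$ and $1 \leq r < \frac d2$ be integers and let $f_{d,r}(x) = f_{d,r}(x;q) := \sum_{\lambda} x^{\ell(\lambda)} q^{|\lambda|}$, where the sum runs over all partitions $\lambda$ (including the empty partition) such that every part is congruent to $0, \pm r \pmod d$, consecutive parts satisfy $\lambda_i - \lambda_{i+1} \geq d$, and $\lambda_i - \lambda_{i+1} > d$ whenever $d \mid \lambda_i$; here $\ell(\lambda)$ is the number of parts and $|\lambda|$ the sum of the parts. Then, as formal power series in $x$ and $q$, \[ f_{d,r}(x) = \left(1 + xq^r + xq^{d-r}\right) f_{d,r}\left(xq^d\right) + xq^d\left(1 - xq^d\right) f_{d,r}\left(xq^{2d}\right). \] *)

(* Defs.v *)
(* Bivariate formal power series in x and q with integer
   coefficients, represented by their coefficient functions: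
   F m n = coefficient of x^m q^n. *)
From mathcomp Require Import all_boot all_order all_algebra.
Set Implicit Arguments. Unset Strict Implicit. Unset Printing Implicit Defensive.
Import Order.TTheory GRing.Theory Num.Theory.
Local Open Scope ring_scope.

Definition fps2 := nat -> nat -> int.

Definition fps2_add (F G : fps2) : fps2 := fun m n => F m n + G m n.
Definition fps2_opp (F : fps2) : fps2 := fun m n => - F m n.
Definition fps2_mul (F G : fps2) : fps2 := fun m n =>
  \sum_(i < m.+1) \sum_(j < n.+1) F i j * G (m - i)%N (n - j)%N.
Definition fps2_mon (a b : nat) : fps2 := fun m n => ((m == a) && (n == b))%:R.
Definition fps2_subst_xq (k : nat) (F : fps2) : fps2 := fun m n =>
  if (k * m <= n)%N then F m (n - k * m)%N else 0.

Definition part_ok (d r p : nat) : bool :=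
  (0 < p)%N && [|| (p %% d == 0)%N, (p %% d == r %% d)%N | ((p + r) %% d == 0)%N].
Definition gap_ok (d : nat) (a b : nat) : bool :=
  (b + d <= a)%N && ((d %| a)%N ==> (b + d < a)%N).
Definition admissible (d r : nat) (s : seq nat) : bool :=
  all (part_ok d r) s && sorted (gap_ok d) s.

(* Such a partition has all parts <= n, so they are exactly
   the m-tuples with entries in 'I_(n+1) satisfying the conditions. *)
Definition fdr (d r : nat) : fps2 := fun m n =>
  (#|[set t : m.-tuple 'I_n.+1 |
       admissible d r (map val t) && (sumn (map val t) == n)%N]|)%:R.

(* Main.v *)
Set Warnings "-notation-overridden,-ambiguous-paths".
Require Import Defs.
From mathcomp Require Import all_boot all_order all_algebra zify.
Set Implicit Arguments. Unset Strict Implicit. Unset Printing Implicit Defensive.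

Definition K (P : seq nat -> bool) (m n : nat) : nat :=
  #|[set t : m.-tuple 'I_n.+1 | P (map val t) && (sumn (map val t) == n)]|.

Definition LK (P : seq nat -> bool) (m n : nat) : seq (seq nat) :=
  map (fun t : m.-tuple 'I_n.+1 => map val t)
    (enum [set t : m.-tuple 'I_n.+1 | P (map val t) && (sumn (map val t) == n)]).

Lemma size_LK P m n : size (LK P m n) = K P m n.
Proof. by rewrite /LK size_map /K cardE. Qed.

Lemma uniq_LK P m n : uniq (LK P m n).
Proof.
rewrite /LK map_inj_uniq ?enum_uniq //.
move=> t1 t2 /= h; apply: val_inj; apply: (inj_map val_inj); exact: h.
Qed.

Lemma mem_sumn (s : seq nat) x : x \in s -> x <= sumn s.
Proof.
elim: s => //= y s IH; rewrite in_cons => /orP [/eqP -> | /IH h].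
  exact: leq_addr.
by apply: (leq_trans h); exact: leq_addl.
Qed.

Lemma mem_LK P m n s :
  (s \in LK P m n) = [&& size s == m, P s & sumn s == n].
Proof.
apply/idP/idP.
  case/mapP => t; rewrite mem_enum inE => /andP [hP hs] ->.
  by rewrite size_map size_tuple eqxx hP hs.
case/and3P => /eqP hsz hP /eqP hs.
have hu : size (map (@inord n) s) == m by rewrite size_map hsz.
have hv : map val (Tuple hu) = s.
  rewrite /= -map_comp -[RHS]map_id; apply/eq_in_map => x hx /=.
  by rewrite inordK // ltnS -hs mem_sumn.
apply/mapP; exists (Tuple hu) => //.
by rewrite mem_enum inE hv hP hs eqxx.
Qed.

Lemma K_le (P Q : seq nat -> bool) m1 n1 m2 n2 (f : seq nat -> seq nat) (g : seq nat -> seq nat) :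
  (forall s, size s = m1 -> sumn s = n1 -> P s ->
     [/\ size (f s) = m2, sumn (f s) = n2, Q (f s) & g (f s) = s]) ->
  K P m1 n1 <= K Q m2 n2.
Proof.
move=> H; rewrite -!size_LK -(size_map f).
apply: uniq_leq_size.
  rewrite map_inj_in_uniq ?uniq_LK // => x y.
  rewrite !mem_LK => /and3P [/eqP h1 h2 /eqP h3] /and3P [/eqP h4 h5 /eqP h6] e.
  have [_ _ _ <-] := H x h1 h3 h2; have [_ _ _ <-] := H y h4 h6 h5.
  by rewrite e.
move=> y /mapP [x]; rewrite mem_LK => /and3P [/eqP h1 h2 /eqP h3] ->.
have [a b c _] := H x h1 h3 h2.
by rewrite mem_LK a b c !eqxx.
Qed.

Lemma K_bij (P Q : seq nat -> bool) m1 n1 m2 n2 (f : seq nat -> seq nat) (g : seq nat -> seq nat) :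
  (forall s, size s = m1 -> sumn s = n1 -> P s ->
     [/\ size (f s) = m2, sumn (f s) = n2, Q (f s) & g (f s) = s]) ->
  (forall s, size s = m2 -> sumn s = n2 -> Q s ->
     [/\ size (g s) = m1, sumn (g s) = n1, P (g s) & f (g s) = s]) ->
  K P m1 n1 = K Q m2 n2.
Proof.
by move=> H1 H2; apply/eqP; rewrite eqn_leq (K_le H1) (K_le H2).
Qed.

Lemma K_ext (P Q : seq nat -> bool) m n :
  (forall s, size s = m -> sumn s = n -> P s = Q s) -> K P m n = K Q m n.
Proof.
move=> H; apply: (@K_bij _ _ _ _ _ _ id id) => s h1 h2 h3; split => //;
  by rewrite ?H // -?H.
Qed.

Lemma K0 (P : seq nat -> bool) m n : (forall s, size s = m -> sumn s = n -> ~~ P s) -> K P m n = 0.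
Proof.
move=> H; rewrite (@K_ext P (fun _ => false)); last first.
  by move=> s h1 h2; apply/negbTE/H.
by apply/eqP; rewrite cards_eq0; apply/eqP/setP => t; rewrite !inE.
Qed.

Lemma K_split (P Q : seq nat -> bool) m n :
  K P m n = K (fun s => P s && Q s) m n + K (fun s => P s && ~~ Q s) m n.
Proof.
rewrite /K -(cardsID [set t : m.-tuple 'I_n.+1 | Q (map val t)]).
congr (_ + _); apply: eq_card => t; rewrite !inE;
  by case: (P _); case: (Q _); case: (_ == n).
Qed.

Section Main.
Variables d r : nat.
Hypotheses (hd : 3 <= d) (hr : 1 <= r) (hrd : 2 * r < d).

Definition gap2 (a b : nat) := gap_ok d b a.
Definition adm2 (s : seq nat) := all (part_ok d r) s && sorted gap2 s.
Definition AL L m n := K (fun s => adm2 s && (L <= head L s)) m n.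
Definition nxt (p : nat) := p + d + (d %| p).

Lemma gap2E a b : gap2 a b = (nxt a <= b).
Proof.
rewrite /gap2 /gap_ok /nxt.
case: (ltngtP (a + d) b) => h.
- by case: (d %| b); case: (d %| a) => /=; lia.
- by case: (d %| b); case: (d %| a) => /=; lia.
- rewrite -h dvdn_addl ?dvdnn //; case: (d %| a) => /=; lia.
Qed.

Lemma fdr_AL m n : fdr d r m n = ((AL 0 m n)%:R)%R.
Proof.
rewrite /fdr; congr (_ %:R)%R; apply: (@K_bij _ _ _ _ _ _ rev rev) => s h1 h2 h3.
- split; rewrite ?size_rev ?revK ?h1 //.
  + by rewrite sumn_rev.
  + move: h3; rewrite /admissible /adm2 all_rev rev_sorted => ->; by [].
- split; rewrite ?size_rev ?revK ?h1 //.
  + by rewrite sumn_rev.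
  + move: h3; rewrite /admissible /adm2 all_rev rev_sorted => /andP [-> _]; by [].
Qed.

Lemma nxt_ge a : a + d <= nxt a.
Proof. by rewrite /nxt leq_addr. Qed.

Lemma sorted_all L s : sorted gap2 s -> L <= head L s -> all (leq L) s.
Proof.
case: s => //= x t hp hL; rewrite hL /=.
have hp' : path leq x t.
  apply: sub_path hp => a b; rewrite gap2E => h.
  by apply: leq_trans (leq_trans (leq_addr d a) (nxt_ge a)) h.
apply: sub_all (order_path_min leq_trans hp') => y /=.
exact: leq_trans hL.
Qed.

Lemma sumn_shift c s : sumn (map (addn^~ c) s) = sumn s + c * size s.
Proof. elim: s => //= [|x s ->]; lia. Qed.

Lemma sumn_ge L s : all (leq L) s -> L * size s <= sumn s.
Proof. elim: s => /= [|x s IH /andP [h1 /IH h2]]; lia. Qed.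

Lemma nxt_shift k a : nxt (a + k * d) = nxt a + k * d.
Proof. rewrite /nxt dvdn_addl ?dvdn_mull //; lia. Qed.

Lemma part_ok_shift k x : 0 < x -> part_ok d r (x + k * d) = part_ok d r x.
Proof.
move=> hx; rewrite /part_ok.
have -> : x + k * d + r = k * d + (x + r) by lia.
rewrite (addnC x) !modnMDl hx; have -> : 0 < k * d + x by lia.
by [].
Qed.

Lemma adm2_shift k s : all (leq 1) s -> adm2 (map (addn^~ (k * d)) s) = adm2 s.
Proof.
move=> hs; rewrite /adm2 all_map sorted_map.
congr (_ && _).
  by apply: eq_in_all => x hx /=; rewrite part_ok_shift //; move/allP: hs; apply.
case: s {hs} => //= x t; apply: eq_path => a b /=; rewrite !gap2E nxt_shift; lia.
Qed.

Lemma adm2_shiftc c s : d %| c -> all (leq 1) s -> adm2 (map (addn^~ c) s) = adm2 s.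
Proof. by case/dvdnP => k ->; apply: adm2_shift. Qed.

Lemma adm2_pos s : adm2 s -> all (leq 1) s.
Proof. by case/andP => h _; apply: sub_all h => x /andP []. Qed.

Lemma AL_shift c m n : d %| c ->
  AL c.+1 m n = if c * m <= n then AL 0 m (n - c * m) else 0.
Proof.
move=> hc; case: ifP => h.
- apply: (@K_bij _ _ _ _ _ _ (map (subn^~ c)) (map (addn^~ c))).
  + move=> s h1 h2 /andP [ha hh].
    have hall : all (leq c.+1) s by apply: sorted_all (proj2 (andP ha)) hh.
    have e : map (addn^~ c) (map (subn^~ c) s) = s.
      rewrite -map_comp -[RHS]map_id; apply/eq_in_map => x hx /=.
      by rewrite subnK //; move/allP: hall => /(_ x hx); lia.
    have hpos : all (leq 1) (map (subn^~ c) s).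
      rewrite all_map; apply: sub_all hall => x /=; lia.
    have hs := sumn_shift c (map (subn^~ c) s); rewrite e size_map h1 in hs.
    split.
    * by rewrite size_map.
    * lia.
    * by rewrite -(adm2_shiftc hc hpos) e ha.
    * exact: e.
  + move=> t h1 h2 /andP [ha _]; have hpos := adm2_pos ha.
    have hs := sumn_shift c t; rewrite h1 in hs.
    split.
    * by rewrite size_map.
    * lia.
    * rewrite (adm2_shiftc hc hpos) ha /=.
      by case: t hpos {h1 h2 ha hs} => //= x t /andP [hx _]; lia.
    * rewrite -map_comp -[RHS]map_id; apply/eq_in_map => x hx /=.
      by rewrite addnK.
- apply: K0 => s h1 h2; apply/negP => /andP [ha hh].
  have hall : all (leq c.+1) s by apply: sorted_all (proj2 (andP ha)) hh.
  have := sumn_ge hall; rewrite h1 h2 mulSn; lia.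
Qed.

Lemma adm2_cons p t :
  adm2 (p :: t) = [&& part_ok d r p, adm2 t & nxt p <= head (nxt p) t].
Proof.
rewrite /adm2 /= -!andbA; congr (_ && _).
case: t => [|y t] /=; first by rewrite leqnn.
rewrite gap2E; case: [|| _, _ | _]; case: (part_ok d r y && _); case: (path _ _ _); case: (nxt p <= y) => //.
Qed.

Lemma AL_cons p m n : part_ok d r p ->
  K (fun s => adm2 s && (head 0 s == p)) m.+1 n =
  if p <= n then AL (nxt p) m (n - p) else 0.
Proof.
move=> hp; case: ifP => h.
- apply: (@K_bij _ _ _ _ _ _ behead (cons p)).
  + case=> // x t [h1] /= h2 /andP [ha /eqP hx]; subst x.
    move: ha; rewrite adm2_cons => /and3P [_ h3 h4].
    split => //; [lia | by rewrite h3 h4].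
  + move=> t h1 h2 /andP [h3 h4]; split => //=; [by rewrite h1 | lia |].
    by rewrite adm2_cons hp h3 h4 eqxx.
- apply: K0; case=> // x t _ /= h2; apply/negP => /andP [_ /eqP hx]; lia.
Qed.

Lemma modk k p : k * d <= p -> p < k * d + d -> p %% d = p - k * d.
Proof.
move=> h1 h2; rewrite -{1}(subnK h1) addnC modnMDl modn_small //; lia.
Qed.

Lemma part_okE k p : k * d <= p -> p < k * d + d ->
  part_ok d r p = (0 < p) && [|| p == k * d, p == k * d + r | p + r == k * d + d].
Proof.
move=> h1 h2; rewrite /part_ok (modk h1 h2) (@modn_small r) ?(leq_trans _ hrd) //; last lia.
congr (_ && _); congr [|| _, _ | _]; [lia | lia |].
case: (ltnP (p + r) (k * d + d)) => h3.
  rewrite (@modk k (p + r)) //; lia.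
rewrite (@modk k.+1 (p + r)) ?mulSn; lia.
Qed.

Lemma pok_small p : part_ok d r p -> p <= d -> [|| p == r, p == d - r | p == d].
Proof.
case: (ltnP p d) => h1.
  by rewrite (@part_okE 0 p); try lia; case/andP => _ /or3P [] /eqP; lia.
move=> _ h2; have -> : p = d by lia.
by rewrite eqxx !orbT.
Qed.

Lemma pok_mid p : part_ok d r p -> d + 1 <= p -> p < 2 * d - r -> p = d + r.
Proof.
move=> + h1 h2; rewrite (@part_okE 1 p); try lia; case/andP => _ /or3P [] /eqP; lia.
Qed.

Lemma pok_mid2 p : part_ok d r p -> 2 * d + 1 <= p -> p < 2 * d + r -> False.
Proof.
move=> + h1 h2; rewrite (@part_okE 2 p); try lia; case/andP => _ /or3P [] /eqP; lia.
Qed.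

Lemma pok_r : part_ok d r r.
Proof. rewrite (@part_okE 0 r); lia. Qed.
Lemma pok_dr : part_ok d r (d - r).
Proof. rewrite (@part_okE 0 (d - r)); lia. Qed.
Lemma pok_d : part_ok d r d.
Proof. rewrite (@part_okE 1 d); lia. Qed.
Lemma pok_dpr : part_ok d r (d + r).
Proof. rewrite (@part_okE 1 (d + r)); lia. Qed.

Lemma nxt_r : nxt r = r + d.
Proof. rewrite /nxt /dvdn modn_small; lia. Qed.
Lemma nxt_dr : nxt (d - r) = 2 * d - r.
Proof. rewrite /nxt /dvdn modn_small; lia. Qed.
Lemma nxt_d : nxt d = 2 * d + 1.
Proof. rewrite /nxt dvdnn; lia. Qed.
Lemma nxt_dpr : nxt (d + r) = 2 * d + r.
Proof. rewrite /nxt dvdn_addr ?dvdnn // /dvdn modn_small; lia. Qed.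

Lemma AL_ext L L' m n : (forall x, part_ok d r x -> (L <= x) = (L' <= x)) ->
  AL L m n = AL L' m n.
Proof.
move=> H; apply: K_ext; case=> [|x t] _ _ /=; first by rewrite !leqnn.
by case h: (adm2 (x :: t)) => //=; apply: H; move: h; rewrite adm2_cons => /andP [].
Qed.

Lemma AL_r m n : AL (r + d) m n = AL d.+1 m n.
Proof.
apply: AL_ext => x hx; case: (ltnP x (r + d)) => h1; last lia.
case: (ltnP x d.+1) => h2; first lia.
have := pok_mid hx; lia.
Qed.

Lemma AL_dpr m n : AL (2 * d + r) m n = AL (2 * d).+1 m n.
Proof.
apply: AL_ext => x hx; case: (ltnP x (2 * d + r)) => h1; last lia.
case: (ltnP x (2 * d).+1) => h2; first lia.
have := pok_mid2 hx; lia.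
Qed.

Lemma AL_main m n : AL 0 m.+1 n =
  AL d.+1 m.+1 n + (if r <= n then AL d.+1 m (n - r) else 0)
  + (if d - r <= n then AL (2 * d - r) m (n - (d - r)) else 0)
  + (if d <= n then AL (2 * d).+1 m (n - d) else 0).
Proof.
rewrite /AL (K_split _ (fun s => d < head 0 s)).
have -> : K (fun s => (adm2 s && (0 <= head 0 s)) && (d < head 0 s)) m.+1 n = AL d.+1 m.+1 n.
  by apply: K_ext; case=> //= x t _ _; rewrite andbT.
rewrite -!addnA; congr (_ + _).
rewrite (K_split _ (fun s => head 0 s == r)).
have -> : K (fun s => (adm2 s && (0 <= head 0 s)) && ~~ (d < head 0 s) && (head 0 s == r)) m.+1 n
   = K (fun s => adm2 s && (head 0 s == r)) m.+1 n.
  apply: K_ext; case=> //= x t _ _; rewrite andbT.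
  case: (x =P r) => [-> | _]; last by rewrite !andbF.
  rewrite (_ : (d < r) = false); last lia.
  by rewrite !andbT.
rewrite AL_cons ?pok_r // nxt_r -/(AL _ _ _) AL_r; congr (_ + _).
rewrite (K_split _ (fun s => head 0 s == d - r)).
have -> : K (fun s => (adm2 s && (0 <= head 0 s)) && ~~ (d < head 0 s) && ~~ (head 0 s == r) && (head 0 s == d - r)) m.+1 n
   = K (fun s => adm2 s && (head 0 s == d - r)) m.+1 n.
  apply: K_ext; case=> //= x t _ _; rewrite andbT.
  case: (x =P (d - r)) => [-> | _]; last by rewrite !andbF.
  rewrite (_ : (d < d - r) = false); last lia.
  rewrite (_ : (d - r == r) = false); last lia.
  by rewrite !andbT.
rewrite AL_cons ?pok_dr // nxt_dr -/(AL _ _ _); congr (_ + _).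
have -> : K (fun s => (adm2 s && (0 <= head 0 s)) && ~~ (d < head 0 s) && ~~ (head 0 s == r) && ~~ (head 0 s == d - r)) m.+1 n
   = K (fun s => adm2 s && (head 0 s == d)) m.+1 n.
  apply: K_ext; case=> //= x t _ _; rewrite andbT.
  case ha: (adm2 (x :: t)) => //=.
  have hx : part_ok d r x by move: ha; rewrite adm2_cons => /andP [].
  rewrite -leqNgt; case: (leqP x d) => hxd /=; last by apply/esym/eqP; lia.
  have := pok_small hx hxd; case/or3P => /eqP ->; rewrite ?eqxx /= ?andbF.
  1,2: by apply/esym/eqP; lia.
  by apply/andP; split; apply/eqP; lia.
by rewrite AL_cons ?pok_d // nxt_d addn1.
Qed.

Lemma AL0 L L' n : AL L 0 n = AL L' 0 n.
Proof. by apply: K_ext; case=> //= _ _; rewrite !leqnn. Qed.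

Lemma AL_drS m n : AL d.+1 m.+1 n =
  AL (2 * d - r) m.+1 n + (if d + r <= n then AL (2 * d).+1 m (n - (d + r)) else 0).
Proof.
rewrite /AL (K_split _ (fun s => head 0 s == d + r)) addnC; congr (_ + _).
  apply: K_ext; case=> //= x t _ _.
  case ha: (adm2 (x :: t)) => //=.
  have hx : part_ok d r x by move: ha; rewrite adm2_cons => /andP [].
  case: (ltnP x (2 * d - r)) => h2.
    case: (leqP x d) => h1 /=; first lia.
    have h1p : d + 1 <= x by lia.
    by have := pok_mid hx h1p h2 => ->; rewrite eqxx.
  have -> : (x == d + r) = false by lia.
  by rewrite /=; apply/esym; lia.
have -> : K (fun s => adm2 s && (d.+1 <= head d.+1 s) && (head 0 s == d + r)) m.+1 n
   = K (fun s => adm2 s && (head 0 s == d + r)) m.+1 n.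
  apply: K_ext; case=> //= x t _ _.
  case: (x =P d + r) => [-> | _]; last by rewrite !andbF.
  rewrite (_ : d < d + r); last lia.
  by rewrite !andbT.
by rewrite AL_cons ?pok_dpr // nxt_dpr -/(AL _ _ _) AL_dpr.
Qed.
End Main.

From Stdlib Require Import FunctionalExtensionality.
Import GRing.Theory.
Local Open Scope ring_scope.

Lemma sum_if_eq (F : nat -> int) a k :
  \sum_(i < k) (if (i : nat) == a then F i else 0) = if (a < k)%N then F a else 0.
Proof. by rewrite -big_mkcond big_ord1_eq. Qed.

Lemma mul_monl a b G m n : fps2_mul (fps2_mon a b) G m n =
  if (a <= m)%N && (b <= n)%N then G (m - a)%N (n - b)%N else 0.
Proof.
rewrite /fps2_mul /fps2_mon.
transitivity (\sum_(i < m.+1) if (i : nat) == a then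
   \sum_(j < n.+1) (if (j : nat) == b then G (m - i)%N (n - j)%N else 0) else 0).
  apply: eq_bigr => i _; case: eqP => hi /=.
    by apply: eq_bigr => j _; case: eqP => hj /=; rewrite ?mul1r ?mul0r.
  by rewrite big1 // => j _; rewrite mul0r.
rewrite (sum_if_eq (fun i => \sum_(j < n.+1) (if (j : nat) == b then G (m - i)%N (n - j)%N else 0)))
   (sum_if_eq (fun j => G (m - a)%N (n - j)%N)) !ltnS.
by case: (a <= m)%N; case: (b <= n)%N.
Qed.

Lemma mul_addl F G H m n :
  fps2_mul (fps2_add F G) H m n = fps2_mul F H m n + fps2_mul G H m n.
Proof.
rewrite /fps2_mul /fps2_add -big_split; apply: eq_bigr => i _.
rewrite -big_split; apply: eq_bigr => j _; exact: mulrDl.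
Qed.

Lemma mul_oppl F H m n : fps2_mul (fps2_opp F) H m n = - fps2_mul F H m n.
Proof.
rewrite /fps2_mul /fps2_opp -sumrN; apply: eq_bigr => i _.
rewrite -sumrN; apply: eq_bigr => j _; exact: mulNr.
Qed.

Lemma mul_extl F F' H m n : (forall i j, F i j = F' i j) ->
  fps2_mul F H m n = fps2_mul F' H m n.
Proof.
move=> e; rewrite /fps2_mul; apply: eq_bigr => i _; apply: eq_bigr => j _.
by rewrite e.
Qed.

Lemma inner_coef d i j :
  fps2_mul (fps2_mon 1 d) (fps2_add (fps2_mon 0 0) (fps2_opp (fps2_mon 1 d))) i j =
  fps2_add (fps2_mon 1 d) (fps2_opp (fps2_mon 2 (2 * d))) i j.
Proof.
rewrite mul_monl /fps2_add /fps2_opp /fps2_mon.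
case: ifP => h.
  have -> : ((i - 1 == 0)%N && (j - d == 0)%N) = ((i == 1)%N && (j == d)%N) by lia.
  by have -> : ((i - 1 == 1)%N && (j - d == d)%N) = ((i == 2)%N && (j == 2 * d)%N) by lia.
have -> : ((i == 1)%N && (j == d)%N) = false by lia.
by have -> : ((i == 2)%N && (j == 2 * d)%N) = false by lia.
Qed.

Lemma subst1 d r (hd : (3 <= d)%N) (hr : (1 <= r)%N) (hrd : (2 * r < d)%N) m n :
  fps2_subst_xq d (fdr d r) m n = (AL d r d.+1 m n)%:R.
Proof.
rewrite /fps2_subst_xq (AL_shift hd hr hrd) ?dvdnn //.
by case: ifP => // _; rewrite fdr_AL.
Qed.

Lemma subst2 d r (hd : (3 <= d)%N) (hr : (1 <= r)%N) (hrd : (2 * r < d)%N) m n :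
  fps2_subst_xq (2 * d) (fdr d r) m n = (AL d r (2 * d).+1 m n)%:R.
Proof.
rewrite /fps2_subst_xq (AL_shift hd hr hrd) ?dvdn_mull //.
by case: ifP => // _; rewrite fdr_AL.
Qed.

Theorem proposition2p1 (d r : nat) (hd : (3 <= d)%N) (hr : (1 <= r)%N)
  (hrd : (2 * r < d)%N) :
  fdr d r =
  fps2_add
    (fps2_mul
       (fps2_add (fps2_mon 0 0) (fps2_add (fps2_mon 1 r) (fps2_mon 1 (d - r))))
       (fps2_subst_xq d (fdr d r)))
    (fps2_mul
       (fps2_mul (fps2_mon 1 d) (fps2_add (fps2_mon 0 0) (fps2_opp (fps2_mon 1 d))))
       (fps2_subst_xq (2 * d) (fdr d r))).
Proof.
apply: functional_extensionality => m; apply: functional_extensionality => n.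
rewrite {1}/fps2_add mul_addl mul_monl mul_addl !mul_monl.
rewrite (mul_extl _ _ _ (inner_coef d)) mul_addl mul_oppl !mul_monl.
rewrite !subst1 // !subst2 // fdr_AL // !subn0.
case: m => [|m].
  by rewrite /= (AL0 _ _ _ d.+1) !addr0.
rewrite (AL_main hd hr hrd) !subSS !subn0 /=.
case: m => [|m].
  rewrite (AL0 _ _ (2 * d - r) d.+1) /=.
  rewrite !natz.
  case: (r <= n)%N; case: (d - r <= n)%N; case: (d <= n)%N; lia.
rewrite (AL_drS hd hr hrd m (n - (d - r))) subn1 /=.
have -> : (n - (d - r) - (d + r))%N = (n - 2 * d)%N by lia.
rewrite !natz.
case h1: (r <= n)%N; case h2: (d - r <= n)%N; case h3: (d <= n)%N;
  case h4: (d + r <= n - (d - r))%N; case h5: (2 * d <= n)%N; lia.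
Qed.
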